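(* Let $\mathcal{G}$ be a locally finite one-ended Borel graph on a standard Borel space $X$ and let $\mathcal{B}$ be a Borel generating set for the cycle space of $\mathcal{G}$. Let $F\subseteq X$ be a finite set such that the induced subgraph $\mathcal{G}[F]$ is connected, and let $H:=\mathcal{G}[F]\setminus\ker(F)$. Then $\mathrm{ext}(H)$ is connected in $H$, i.e. any two vertices of $\mathrm{ext}(H)$ are joined by a path in $\mathcal{G}[F]$ using no edge of $\ker(F)$.
   Context: One-ended: every component is one-ended. The cycle space $\mathcal C(\mathcal G)$ is the subspace of $\mathbb Z_2[E(\mathcal G)]$ (finitely supported edge sets) generated by indicator functions of (finite) cycles. A Borel generating set is a Borel family $\mathcal B$ of finite cycles of $\mathcal G$ whose indicator functions generate $\mathcal C(\mathcal G)$. For an edge $e$, $e^\ast:=\{C\in\mathcal B: e\in E(C)\}$; for $U\subseteq X$, $\ker(U):=\{e\in\mathcal G: \text{every } C\in e^\ast \text{ is contained in } \mathcal G[U]\}$. For a finite subgraph $H$ of $\mathcal G$, the exterior $\mathrm{ext}(H)\subseteq V(H)$ is the set of vertices of $H$ belonging to an $H$-connected component $K$ for which there is an infinite ray in $\mathcal G$ starting at a vertex of $K$ and meeting $H$ only at its starting vertex. *)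

(* Defs.v *)
From Stdlib Require Import List Arith Relations.
Import ListNotations.
Set Implicit Arguments.

Section Defs.
Variable X : Type.
Variable adj : X -> X -> Prop.

Definition conn (R : X -> X -> Prop) : X -> X -> Prop := clos_refl_trans X R.

Definition infinite_set (P : X -> Prop) : Prop :=
  ~ exists l : list X, forall z, P z -> In z l.

Definition adj_minus (S : list X) (a b : X) : Prop :=
  adj a b /\ ~ In a S /\ ~ In b S.

Definition locally_finite : Prop :=
  forall x, exists l : list X, forall y, adj x y -> In y l.

(** one-ended: every connected component of G has exactly one end, i.e. for
    every finite vertex set S, the part of that component outside S has
    exactly one infinite connected component of G - S. *)
Definition one_ended : Prop :=
  forall (x : X) (S : list X),
    (exists y, conn adj x y /\ ~ In y S /\ infinite_set (conn (adj_minus S) y)) /\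
    (forall y z, conn adj x y -> conn adj x z -> ~ In y S -> ~ In z S ->
       infinite_set (conn (adj_minus S) y) ->
       infinite_set (conn (adj_minus S) z) ->
       conn (adj_minus S) y z).

(** finite cycles, represented by the cyclic list of their vertices *)
Definition is_cycle (C : list X) : Prop :=
  3 <= length C /\ NoDup C /\
  forall i, i < length C -> exists a b,
      nth_error C i = Some a /\ nth_error C (S i mod length C) = Some b /\ adj a b.

Definition cyc_edge (C : list X) (x y : X) : Prop :=
  exists i, i < length C /\
    ((nth_error C i = Some x /\ nth_error C (S i mod length C) = Some y) \/
     (nth_error C i = Some y /\ nth_error C (S i mod length C) = Some x)).

Fixpoint odd_count {A : Type} (P : A -> Prop) (l : list A) : Prop :=
  match l with
  | [] => False
  | a :: l' => (P a /\ ~ odd_count P l') \/ (~ P a /\ odd_count P l')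
  end.

(** B (a family of finite cycles) generates the cycle space over Z_2:
    the indicator of every finite cycle is a finite Z_2-sum of indicators of
    members of B. *)
Definition generates_cycle_space (B : list X -> Prop) : Prop :=
  (forall C, B C -> is_cycle C) /\
  forall C, is_cycle C -> exists Cs : list (list X),
      Forall B Cs /\
      forall x y, adj x y -> (cyc_edge C x y <-> odd_count (fun D => cyc_edge D x y) Cs).

Definition ker (B : list X -> Prop) (U : X -> Prop) (x y : X) : Prop :=
  adj x y /\ forall C, B C -> cyc_edge C x y -> forall v, In v C -> U v.

Definition H_adj (B : list X -> Prop) (F : list X) (x y : X) : Prop :=
  In x F /\ In y F /\ adj x y /\ ~ ker B (fun v => In v F) x y.

Definition ext (B : list X -> Prop) (F : list X) (u : X) : Prop :=
  In u F /\
  exists (w : X) (r : nat -> X),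
    conn (H_adj B F) u w /\ r 0 = w /\
    (forall n, adj (r n) (r (S n))) /\
    (forall m n, r m = r n -> m = n) /\
    (forall n, ~ In (r (S n)) F).

End Defs.

(* Main.v *)
Require Import Defs.
From Stdlib Require Import List Relations Arith Lia ClassicalEpsilon Classical ListDec FinFun.
Import ListNotations.

Definition ind (P : Prop) : nat := if excluded_middle_informative P then 1 else 0.
Fixpoint sumf {A} (f : A -> nat) (l : list A) : nat :=
  match l with [] => 0 | a :: l' => f a + sumf f l' end.
Definition cnt {A} (P : A -> Prop) (l : list A) := sumf (fun x => ind (P x)) l.

Lemma ind_true (P : Prop) : P -> ind P = 1.
Proof. unfold ind; destruct (excluded_middle_informative P); tauto. Qed.
Lemma ind_false (P : Prop) : ~ P -> ind P = 0.
Proof. unfold ind; destruct (excluded_middle_informative P); tauto. Qed.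

Lemma sumf_app {A} (f : A -> nat) l1 l2 : sumf f (l1 ++ l2) = sumf f l1 + sumf f l2.
Proof. induction l1; simpl; lia. Qed.
Lemma cnt_app {A} (P : A -> Prop) l1 l2 : cnt P (l1 ++ l2) = cnt P l1 + cnt P l2.
Proof. apply sumf_app. Qed.
Lemma sumf_ext {A} (f g : A -> nat) l : (forall x, In x l -> f x = g x) -> sumf f l = sumf g l.
Proof. induction l; simpl; intros H; auto. Qed.
Lemma cnt_ext {A} (P Q : A -> Prop) l : (forall x, In x l -> (P x <-> Q x)) -> cnt P l = cnt Q l.
Proof. intros H; apply sumf_ext; intros x Hx; unfold ind.
  destruct (excluded_middle_informative (P x)), (excluded_middle_informative (Q x)); firstorder. Qed.
Lemma cnt_or {A} (P Q : A -> Prop) l : (forall x, In x l -> ~ (P x /\ Q x)) ->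
  cnt (fun x => P x \/ Q x) l = cnt P l + cnt Q l.
Proof. induction l as [|a l IHl]; simpl; intros H; auto. unfold cnt in *; simpl. rewrite IHl by auto.
  specialize (H a (or_introl eq_refl)). unfold ind.
  destruct (excluded_middle_informative (P a)), (excluded_middle_informative (Q a)),
    (excluded_middle_informative (P a \/ Q a)); firstorder lia. Qed.
Lemma cnt_zero {A} (P : A -> Prop) l : (forall x, In x l -> ~ P x) -> cnt P l = 0.
Proof. induction l as [|a l IHl]; simpl; intros H; auto. unfold cnt in *; simpl. rewrite IHl by auto.
  rewrite ind_false; auto. Qed.
Lemma cnt_eq1 {A} (a : A) l : NoDup l -> In a l -> cnt (fun x => x = a) l = 1.
Proof. induction l as [|b l IH]; simpl; intros Hn Hi; [contradiction|].
  inversion Hn; subst. unfold cnt in *; simpl. destruct Hi as [->|Hi].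
  - rewrite ind_true by auto. fold (cnt (fun x => x = a) l). rewrite cnt_zero; auto.
    intros x Hx ->; auto.
  - rewrite ind_false. rewrite IH; auto. intros ->; auto. Qed.
Lemma sumf_par {A} (f h : A -> nat) l : (forall x, In x l -> Nat.even (f x) = Nat.even (h x)) ->
  Nat.even (sumf f l) = Nat.even (sumf h l).
Proof. induction l; simpl; intros H; auto. rewrite !Nat.even_add, IHl, H; auto. Qed.
Lemma sumf_even {A} (f : A -> nat) l : (forall x, In x l -> Nat.even (f x) = true) ->
  Nat.even (sumf f l) = true.
Proof. induction l; simpl; intros H; auto. rewrite !Nat.even_add, IHl, H; auto. Qed.
Lemma sumf_mul_l {A} c (f : A -> nat) l : c * sumf f l = sumf (fun x => c * f x) l.
Proof. induction l; simpl; lia. Qed.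
Lemma sumf_plus {A} (f g : A -> nat) l : sumf (fun x => f x + g x) l = sumf f l + sumf g l.
Proof. induction l; simpl; lia. Qed.
Lemma sumf_swap {A B} (h : A -> B -> nat) l1 l2 :
  sumf (fun a => sumf (fun b => h a b) l2) l1 = sumf (fun b => sumf (fun a => h a b) l1) l2.
Proof. induction l1; simpl.
  - induction l2; simpl; auto.
  - rewrite IHl1. rewrite <- sumf_plus. reflexivity. Qed.
Lemma odd_count_cnt {A} (P : A -> Prop) l : odd_count P l <-> Nat.even (cnt P l) = false.
Proof. induction l as [|a l IHl]; simpl. split; [tauto|discriminate].
  rewrite IHl. unfold cnt in *; simpl. rewrite Nat.even_add. unfold ind.
  destruct (excluded_middle_informative (P a)); simpl;
  destruct (Nat.even (sumf (fun x => if excluded_middle_informative (P x) then 1 else 0) l)); simpl;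
  split; intros; try tauto; try discriminate; firstorder congruence. Qed.

Fixpoint pairs {A} (l : list A) : list (A * A) :=
  match l with
  | [] => []
  | a :: t => match t with [] => [] | b :: _ => (a, b) :: pairs t end
  end.

Definition cpairs {A} (C : list A) : list (A * A) :=
  match C with [] => [] | c :: _ => pairs (C ++ [c]) end.

Lemma pairs_app {A} (l1 l2 : list A) z : pairs (l1 ++ z :: l2) = pairs (l1 ++ [z]) ++ pairs (z :: l2).
Proof. induction l1 as [|a l1 IH]; simpl; auto.
  destruct l1 as [|b l1]; simpl in *; auto. rewrite IH. reflexivity. Qed.

Lemma pairs_nth {A} (l : list A) i a b :
  nth_error (pairs l) i = Some (a, b) <-> nth_error l i = Some a /\ nth_error l (S i) = Some b.
Proof. revert i; induction l as [|x l IH]; intros i; simpl.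
  - destruct i; simpl; split; try discriminate; intros [? ?]; discriminate.
  - destruct l as [|y l].
    + destruct i; simpl; split; try discriminate; intros [? H]; try discriminate.
    + destruct i; simpl.
      * split. intros H; inversion H; auto. intros [H1 H2]; inversion H1; inversion H2; auto.
      * rewrite IH. simpl. tauto. Qed.

Lemma pairs_In {A} (l : list A) a b : In (a, b) (pairs l) -> In a l /\ In b l.
Proof. intros H. apply In_nth_error in H as [i Hi]. apply pairs_nth in Hi as [H1 H2].
  split; eapply nth_error_In; eauto. Qed.

Lemma pairs_In_snoc {A} (l : list A) z a b : In (a, b) (pairs (l ++ [z])) -> In a l /\ (In b l \/ b = z).
Proof. intros H. apply In_nth_error in H as [i Hi]. apply pairs_nth in Hi as [H1 H2].
  assert (i < length l).
  { assert (S i < length (l ++ [z])) by (apply nth_error_Some; congruence).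
    rewrite length_app in H; simpl in H; lia. }
  rewrite nth_error_app1 in H1 by lia. split. eapply nth_error_In; eauto.
  destruct (Nat.lt_ge_cases (S i) (length l)).
  - rewrite nth_error_app1 in H2 by lia. left; eapply nth_error_In; eauto.
  - rewrite nth_error_app2 in H2 by lia. replace (S i - length l) with 0 in H2 by lia.
    simpl in H2. inversion H2; auto. Qed.

Lemma mod_S_cases i n : i < n -> (S i < n /\ S i mod n = S i) \/ (S i = n /\ S i mod n = 0).
Proof. intros H. destruct (Nat.lt_ge_cases (S i) n).
  - left; split; auto. apply Nat.mod_small; auto.
  - right. assert (S i = n) by lia. split; auto. rewrite H1. apply Nat.Div0.mod_same. Qed.

Lemma cpairs_nth {A} (C : list A) i a b :
  nth_error (cpairs C) i = Some (a, b) <->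
  i < length C /\ nth_error C i = Some a /\ nth_error C (S i mod length C) = Some b.
Proof. destruct C as [|c t] eqn:E.
  - simpl. destruct i; split; try discriminate; intros; lia.
  - change (cpairs (c :: t)) with (pairs ((c :: t) ++ [c])). clear E.
    remember (c :: t) as D eqn:E. rewrite pairs_nth.
    assert (Hc : nth_error D 0 = Some c) by (subst; reflexivity).
    assert (Hl : length D > 0) by (subst; simpl; lia). clear E.
    split.
    + intros [H1 H2].
      assert (S i < length (D ++ [c])) by (apply nth_error_Some; congruence).
      rewrite length_app in H; simpl in H.
      assert (i < length D) by lia.
      rewrite nth_error_app1 in H1 by lia. split; auto. split; auto.
      destruct (mod_S_cases i (length D) H0) as [[Ha Hb]|[Ha Hb]]; rewrite Hb.
      * rewrite nth_error_app1 in H2 by lia. auto.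
      * rewrite nth_error_app2 in H2 by lia. replace (S i - length D) with 0 in H2 by lia.
        simpl in H2. congruence.
    + intros [H0 [H1 H2]]. rewrite nth_error_app1 by lia. split; auto.
      destruct (mod_S_cases i (length D) H0) as [[Ha Hb]|[Ha Hb]]; rewrite Hb in H2.
      * rewrite nth_error_app1 by lia. auto.
      * rewrite nth_error_app2 by lia. replace (S i - length D) with 0 by lia.
        simpl. congruence. Qed.

Lemma cyc_edge_cpairs {A} (C : list A) a b :
  cyc_edge C a b <-> In (a, b) (cpairs C) \/ In (b, a) (cpairs C).
Proof. unfold cyc_edge. split.
  - intros [i [Hi [[H1 H2]|[H1 H2]]]].
    + left. apply nth_error_In with i. apply cpairs_nth; auto.
    + right. apply nth_error_In with i. apply cpairs_nth; auto.
  - intros [H|H]; apply In_nth_error in H as [i Hi]; apply cpairs_nth in Hi as [? [? ?]];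
    exists i; auto. Qed.

Lemma cpairs_In {A} (C : list A) a b : In (a, b) (cpairs C) -> In a C /\ In b C.
Proof. intros H. apply In_nth_error in H as [i Hi]. apply cpairs_nth in Hi as [? [? ?]].
  split; eapply nth_error_In; eauto. Qed.

Lemma cpairs_nodup {A} (C : list A) : NoDup C -> NoDup (cpairs C).
Proof. intros Hn. apply NoDup_nth_error. intros i j Hi Heq.
  apply nth_error_Some in Hi. destruct (nth_error (cpairs C) i) as [[a b]|] eqn:E; [|congruence].
  symmetry in Heq. apply cpairs_nth in E as [? [E1 _]]. apply cpairs_nth in Heq as [? [E2 _]].
  apply (proj1 (NoDup_nth_error C) Hn); auto. congruence. Qed.

Lemma cpairs_noswap {A} (C : list A) a b : NoDup C -> 3 <= length C ->
  In (a, b) (cpairs C) -> In (b, a) (cpairs C) -> False.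
Proof. intros Hn H3 H1 H2.
  apply In_nth_error in H1 as [i Hi]; apply cpairs_nth in Hi as [Hi [Ha Hb]].
  apply In_nth_error in H2 as [j Hj]; apply cpairs_nth in Hj as [Hj [Hb' Ha']].
  pose proof (proj1 (NoDup_nth_error C) Hn) as Inj.
  assert (E1 : j = S i mod length C).
  { apply Inj; auto. congruence. }
  assert (E2 : i = S j mod length C).
  { apply Inj; auto. congruence. }
  destruct (mod_S_cases i _ Hi) as [[? ?]|[? ?]]; destruct (mod_S_cases j _ Hj) as [[? ?]|[? ?]]; lia. Qed.

Lemma cycle_adj {X} (adj : X -> X -> Prop) C : is_cycle adj C ->
  forall p, In p (cpairs C) -> adj (fst p) (snd p).
Proof. intros [H3 [Hn Ha]] [a b] Hp. apply In_nth_error in Hp as [i Hi].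
  apply cpairs_nth in Hi as [Hi [H1 H2]]. destruct (Ha i Hi) as [a' [b' [E1 [E2 E3]]]].
  simpl. congruence. Qed.

Lemma adj_cycle {X} (adj : X -> X -> Prop) C : 3 <= length C -> NoDup C ->
  (forall p, In p (cpairs C) -> adj (fst p) (snd p)) -> is_cycle adj C.
Proof. intros H3 Hn Ha. split; auto. split; auto. intros i Hi.
  destruct (nth_error C i) as [a|] eqn:E1; [|apply nth_error_Some in Hi; congruence].
  assert (S i mod length C < length C) by (apply Nat.mod_upper_bound; lia).
  destruct (nth_error C (S i mod length C)) as [b|] eqn:E2; [|apply nth_error_Some in H; congruence].
  exists a, b. split; auto. split; auto.
  apply (Ha (a, b)). apply nth_error_In with i. apply cpairs_nth; auto. Qed.

Definition sw {A} (p : A * A) : A * A := (snd p, fst p).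

Lemma count_bij {A} (E : A * A -> Prop) (M P : list (A * A)) :
  NoDup M -> (forall m, E m -> In m M) -> (forall p, E p -> E (sw p) -> False) ->
  NoDup P -> (forall q, In q P -> In (sw q) P -> False) ->
  cnt (fun m => E m /\ (In m P \/ In (sw m) P)) M = cnt (fun p => E p \/ E (sw p)) P.
Proof. intros HM HE Hs. induction P as [|p P IH]; intros HP Hq.
  - simpl. rewrite cnt_zero; auto. intros x _ [_ [[]|[]]].
  - inversion HP; subst.
    assert (swsw : forall q : A * A, sw (sw q) = q) by (intros [? ?]; reflexivity).
    rewrite (cnt_ext _ (fun m => (E m /\ (m = p \/ m = sw p)) \/ (E m /\ (In m P \/ In (sw m) P)))).
    2:{ intros x _. cbn [In]. split.
        - intros [He [[H|H]|[H|H]]].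
          + left; split; auto.
          + right; auto.
          + left; split; auto. right. rewrite H, swsw; auto.
          + right; auto.
        - intros [[He [H|H]]|[He [H|H]]]; split; auto.
          right. left. rewrite H, swsw; auto. }
    rewrite cnt_or.
    2:{ intros x _ [[He [H|H]] [_ [H'|H']]]; subst.
        - contradiction.
        - apply (Hq p); simpl; auto.
        - apply (Hq p); simpl; auto.
        - rewrite swsw in H'. contradiction. }
    rewrite IH; auto. 2:{ intros q Hq1 Hq2; apply (Hq q); simpl; auto. }
    unfold cnt at 3. simpl. f_equal.
    destruct (classic (E p)) as [Ep|nEp].
    + rewrite ind_true by auto. rewrite (cnt_ext _ (fun m => m = p)). apply cnt_eq1; auto.
      intros x _; split. intros [He [H|H]]; auto. subst. exfalso; apply (Hs p); auto.
      intros ->; auto.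
    + destruct (classic (E (sw p))) as [Ep'|nEp'].
      * rewrite ind_true by auto. rewrite (cnt_ext _ (fun m => m = sw p)). apply cnt_eq1; auto.
        intros x _; split. intros [He [H|H]]; auto. subst. contradiction.
        intros ->; auto.
      * rewrite ind_false by tauto. apply cnt_zero. intros x _ [He [H|H]]; subst; auto. Qed.

Lemma last_cons_d {A} (b a : A) l : last (b :: l) a = last l b.
Proof. revert a b; induction l as [|x l IH]; intros a b; auto.
  change (last (b :: x :: l) a) with (last (x :: l) a). rewrite !IH. reflexivity. Qed.

Section Cross.
Variable X : Type.
Variable K : X -> Prop.
Definition cross (p : X * X) : Prop := (K (fst p) /\ ~ K (snd p)) \/ (~ K (fst p) /\ K (snd p)).

Lemma cross_walk (l : list X) a :
  Nat.even (cnt cross (pairs (a :: l)) + ind (K a) + ind (K (last l a))) = true.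
Proof. revert a; induction l as [|b l IH]; intros a.
  - simpl. unfold cnt; simpl. unfold ind. destruct (excluded_middle_informative (K a)); reflexivity.
  - specialize (IH b). change (pairs (a :: b :: l)) with ((a, b) :: pairs (b :: l)).
    rewrite last_cons_d.
    assert (Hc : cnt cross ((a,b) :: pairs (b::l)) = ind (cross (a,b)) + cnt cross (pairs (b::l)))
      by reflexivity. rewrite Hc. revert IH. generalize (cnt cross (pairs (b :: l))). intros c IH.
    rewrite !Nat.even_add in *. unfold cross, ind in *; simpl in *.
    destruct (excluded_middle_informative (K a)), (excluded_middle_informative (K b)),
      (excluded_middle_informative ((K a /\ ~ K b) \/ (~ K a /\ K b))),
      (excluded_middle_informative (K (last l b))); try tauto; simpl in *;
    destruct (Nat.even c); simpl in *; auto. Qed.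

Lemma cross_cycle (C : list X) : Nat.even (cnt cross (cpairs C)) = true.
Proof. destruct C as [|c t]. reflexivity.
  change (cpairs (c :: t)) with (pairs (c :: t ++ [c])).
  pose proof (cross_walk (t ++ [c]) c). rewrite last_last in H.
  rewrite <- Nat.add_assoc, Nat.even_add in H.
  revert H. generalize (cnt cross (pairs (c :: t ++ [c]))). intros n H.
  unfold ind in H; destruct (excluded_middle_informative (K c)); simpl in H;
  destruct (Nat.even n); auto. Qed.
End Cross.

Lemma extract {X} (adj : X -> X -> Prop) (T : X * X -> Prop)
  (irr : forall x, ~ adj x x) (Tsym : forall p, T p <-> T (sw p)) :
  forall n x m, length m <= n ->
  (forall p, In p (pairs (x :: m ++ [x])) -> adj (fst p) (snd p)) ->
  Nat.even (cnt T (pairs (x :: m ++ [x]))) = false ->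
  exists C, is_cycle adj C /\ Nat.even (cnt T (cpairs C)) = false.
Proof.
  induction n as [|n IH]; intros x m Hlen Hadj Hodd.
  - destruct m; [|simpl in Hlen; lia]. exfalso. apply (irr x). apply (Hadj (x, x)). simpl; auto.
  - destruct (classic (NoDup (x :: m))) as [Hnd|Hnd].
    + destruct m as [|y m].
      { exfalso. apply (irr x). apply (Hadj (x, x)). simpl; auto. }
      destruct m as [|z m].
      { exfalso. simpl in Hodd. unfold cnt in Hodd; simpl in Hodd.
        rewrite !Nat.even_add in Hodd. unfold ind in Hodd.
        destruct (excluded_middle_informative (T (x, y))), (excluded_middle_informative (T (y, x)));
        simpl in Hodd; try discriminate; firstorder. }
      exists (x :: y :: z :: m). split.
      * apply adj_cycle; auto. simpl; lia.
      * auto.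
    + apply ListDec.not_NoDup in Hnd.
      2:{ intros a b. apply classic. }
      destruct Hnd as [z [A [Q [R HE]]]].
      assert (Hvs : x :: m ++ [x] = A ++ z :: Q ++ z :: R ++ [x]).
      { change (x :: m ++ [x]) with ((x :: m) ++ [x]). rewrite HE. rewrite <- app_assoc. simpl. rewrite <- app_assoc. reflexivity. }
      rewrite Hvs in Hadj, Hodd.
      rewrite (pairs_app A (Q ++ z :: R ++ [x]) z) in Hadj, Hodd.
      change (z :: Q ++ z :: R ++ [x]) with ((z :: Q) ++ z :: R ++ [x]) in Hadj, Hodd.
      rewrite (pairs_app (z :: Q) (R ++ [x]) z) in Hadj, Hodd.
      assert (HL : length (x :: m) = length (A ++ z :: Q ++ z :: R)) by (rewrite HE; reflexivity).
      rewrite !length_app in HL; simpl in HL; rewrite length_app in HL; simpl in HL.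
      rewrite !cnt_app in Hodd. rewrite !Nat.even_add in Hodd.
      destruct (Nat.even (cnt T (pairs ((z :: Q) ++ [z])))) eqn:E1.
      *
        assert (Hodd2 : Nat.even (cnt T (pairs (A ++ z :: R ++ [x]))) = false).
        { rewrite (pairs_app A (R ++ [x]) z), cnt_app, Nat.even_add.
          revert Hodd. generalize (Nat.even (cnt T (pairs (A ++ [z])))),
            (Nat.even (cnt T (pairs (z :: R ++ [x])))). intros b1 b2.
          destruct b1, b2; simpl; auto. }
        assert (Hadj2 : forall p, In p (pairs (A ++ z :: R ++ [x])) -> adj (fst p) (snd p)).
        { intros p Hp. rewrite (pairs_app A (R ++ [x]) z) in Hp. apply in_app_or in Hp as [Hp|Hp]; apply Hadj;
          apply in_or_app; auto. right; apply in_or_app; auto. }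
        destruct A as [|a A].
        -- simpl in HE. injection HE as Hxz HE'. subst z.
           apply (IH x R); auto. simpl in HL; lia.
        -- simpl in HE. injection HE as Hxa HE'. subst a.
           apply (IH x (A ++ z :: R)).
           ++ rewrite length_app; simpl in HL |- *; lia.
           ++ rewrite <- app_assoc. change ((z :: R) ++ [x]) with (z :: R ++ [x]). exact Hadj2.
           ++ rewrite <- app_assoc. change ((z :: R) ++ [x]) with (z :: R ++ [x]). exact Hodd2.
      * apply (IH z Q).
        -- lia.
        -- intros p Hp. apply Hadj. apply in_or_app; right; apply in_or_app; left; exact Hp.
        -- exact E1. Qed.

Lemma conn_path {X} (R : X -> X -> Prop) a b : conn R a b ->
  exists l, (forall p, In p (pairs (a :: l)) -> R (fst p) (snd p)) /\ last l a = b.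
Proof. intros H. apply clos_rt_rt1n in H. induction H as [x|x y z Hxy _ [l [Hl Hlast]]].
  - exists []. split; auto. intros p [].
  - exists (y :: l). split.
    + intros p Hp. change (pairs (x :: y :: l)) with ((x, y) :: pairs (y :: l)) in Hp.
      destruct Hp as [<-|Hp]; auto.
    + rewrite last_cons_d. auto. Qed.

Lemma conn_sym {X} (R : X -> X -> Prop) : (forall x y, R x y -> R y x) ->
  forall a b, conn R a b -> conn R b a.
Proof. intros Hs a b H. induction H.
  - apply rt_step; auto.
  - apply rt_refl.
  - eapply rt_trans; eauto. Qed.

Lemma conn_mono {X} (R R' : X -> X -> Prop) : (forall x y, R x y -> R' x y) ->
  forall a b, conn R a b -> conn R' a b.
Proof. intros Hs a b H. induction H.
  - apply rt_step; auto.
  - apply rt_refl.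
  - eapply rt_trans; eauto. Qed.

Lemma nodup_exists {X} (l : list X) : exists l', NoDup l' /\ forall x, In x l <-> In x l'.
Proof. induction l as [|a l [l' [Hn Hi]]].
  - exists []. split. constructor. tauto.
  - destruct (classic (In a l')).
    + exists l'. split; auto. intros x; simpl. rewrite Hi. split; auto. intros [<-|?]; auto.
    + exists (a :: l'). split. constructor; auto. intros x; simpl. rewrite Hi. tauto. Qed.

Lemma NoDup_prod {A B} (l1 : list A) (l2 : list B) : NoDup l1 -> NoDup l2 -> NoDup (list_prod l1 l2).
Proof. intros H1 H2. induction H1 as [|a l1 Ha H1 IH]; simpl. constructor.
  apply NoDup_app; auto.
  - apply Injective_map_NoDup; auto. intros x y E; inversion E; auto.
  - intros [x y] Hm Hp. apply in_map_iff in Hm as [z [E _]]. inversion E; subst.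
    apply in_prod_iff in Hp as [? _]. contradiction. Qed.

Lemma ray_infinite {X} (P : X -> Prop) (r : nat -> X) :
  (forall n, P (r n)) -> (forall m n, r m = r n -> m = n) -> infinite_set P.
Proof. intros HP Hinj [l Hl].
  assert (Hnd : NoDup (map r (seq 0 (S (length l))))).
  { apply Injective_map_NoDup. intros x y; apply Hinj. apply seq_NoDup. }
  assert (Hinc : incl (map r (seq 0 (S (length l)))) l).
  { intros x Hx. apply in_map_iff in Hx as [n [<- _]]. apply Hl, HP. }
  pose proof (NoDup_incl_length Hnd Hinc). rewrite length_map, length_seq in H. lia. Qed.

Lemma walk_vertices {X} (R : X -> X -> Prop) (Q : X -> Prop) a l :
  Q a -> (forall x y, R x y -> Q y) ->
  (forall p, In p (pairs (a :: l)) -> R (fst p) (snd p)) -> forall y, In y (a :: l) -> Q y.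
Proof. revert a; induction l as [|b l IH]; intros a Qa HR Hp y Hy.
  - destruct Hy as [<-|[]]; auto.
  - destruct Hy as [<-|Hy]; auto. apply (IH b); auto.
    + apply (HR a b). apply (Hp (a, b)). left; reflexivity.
    + intros p Hp'. apply Hp. right; exact Hp'. Qed.

Theorem lemma3p14 (X : Type) (adj : X -> X -> Prop) (B : list X -> Prop)
    (F : list X)
    (adj_sym : forall x y, adj x y -> adj y x)
    (adj_irrefl : forall x, ~ adj x x)
    (lf : locally_finite adj)
    (oe : one_ended adj)
    (hB : generates_cycle_space adj B)
    (hF : forall x y, In x F -> In y F ->
            conn (fun a b => adj a b /\ In a F /\ In b F) x y) :
  forall u v, ext adj B F u -> ext adj B F v -> conn (H_adj adj B F) u v.
Proof.
  intros u v [uF [wu [ru [Huw [ru0 [radj [rinj rout]]]]]]]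
    [vF [wv [rv [Hvw [rv0 [radjv [rinjv routv]]]]]]].
  apply NNPP; intro Hn.
  set (KER := ker adj B (fun v => In v F)).
  assert (kersym : forall x y, KER x y -> KER y x).
  { intros x y [Ha Hc]. split; auto. intros C HC Hce. apply Hc; auto.
    destruct Hce as [i [Hi [[? ?]|[? ?]]]]; exists i; auto. }
  assert (Hsym : forall x y, H_adj adj B F x y -> H_adj adj B F y x).
  { intros x y [? [? [? Hk]]]. split; auto. split; auto. split; auto.
    intro Hk'; apply Hk. apply kersym; exact Hk'. }
  set (K := fun x => conn (H_adj adj B F) u x).
  assert (connF : forall a b, conn (H_adj adj B F) a b -> In a F -> In b F).
  { intros a b Hab. induction Hab; auto. destruct H as [_ [? _]]; auto. }
  assert (KF : forall x, K x -> In x F).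
  { intros x Hx. apply (connF u); auto. }
  assert (Kstep : forall a b, K a -> H_adj adj B F a b -> K b).
  { intros a b Ha Hab. eapply rt_trans; [exact Ha| apply rt_step; exact Hab]. }
  assert (Kwu : K wu) by exact Huw.
  assert (nKwv : ~ K wv).
  { intros Hk. apply Hn. eapply rt_trans; [exact Hk| apply conn_sym; auto]. }
  assert (wuF : In wu F) by auto.
  assert (wvF : In wv F).
  { apply (connF v); auto. }
  set (Eor := fun p : X * X => K (fst p) /\ In (snd p) F /\ ~ K (snd p) /\ KER (fst p) (snd p)).
  set (T := fun p : X * X => Eor p \/ Eor (sw p)).
  assert (crossT : forall a b, In a F -> In b F -> adj a b -> (cross _ K (a, b) <-> T (a, b))).
  { intros a b Ha Hb Hab. unfold cross, T, Eor, sw; simpl. split.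
    - intros [[Ka nKb]|[nKa Kb]].
      + left. refine (conj Ka (conj Hb (conj nKb _))).
        apply NNPP; intro Hk. apply nKb. apply (Kstep a); auto.
        split; auto.
      + right. refine (conj Kb (conj Ha (conj nKa _))).
        apply NNPP; intro Hk. apply nKa. apply (Kstep b); auto.
        split; auto.
    - intros [[Ka [_ [nKb _]]]|[Kb [_ [nKa _]]]]; auto. }
  assert (Hodd : exists C, is_cycle adj C /\ Nat.even (cnt T (cpairs C)) = false).
  { assert (ru1F : ~ In (ru 1) F) by apply rout.
    assert (rv1F : ~ In (rv 1) F) by apply routv.
    assert (adj1 : adj wu (ru 1)) by (rewrite <- ru0; apply radj).
    assert (adj2 : adj (rv 1) wv) by (apply adj_sym; rewrite <- rv0; apply radjv).
    assert (Hinf : forall r : nat -> X, (forall n, adj (r n) (r (S n))) ->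
      (forall m n, r m = r n -> m = n) -> (forall n, ~ In (r (S n)) F) ->
      infinite_set (conn (adj_minus adj F) (r 1))).
    { intros r Ha Hi Ho. apply (ray_infinite _ (fun n => r (S n))).
      - induction n. apply rt_refl. eapply rt_trans; [exact IHn|]. apply rt_step.
        split; auto.
      - intros m n E. apply Hi in E. lia. }
    assert (cu : conn adj u (ru 1)).
    { apply rt_trans with wu. apply (conn_mono (H_adj adj B F)). intros x y [_ [_ [? _]]]; auto.
      exact Huw. apply rt_step; auto. }
    assert (cv : conn adj u (rv 1)).
    { apply rt_trans with wv. apply (conn_mono (fun a b => adj a b /\ In a F /\ In b F) adj).
      intros x y [? _]; auto. apply hF; auto. apply rt_step. rewrite <- rv0; apply radjv. }
    destruct (oe u F) as [_ Huniq].
    assert (c12 : conn (adj_minus adj F) (ru 1) (rv 1)) by (apply Huniq; auto).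
    destruct (conn_path _ _ _ c12) as [l1 [Hl1 Hl1last]].
    destruct (conn_path _ _ _ (hF wv wu wvF wuF)) as [l2 [Hl2 Hl2last]].
    assert (l2ne : l2 <> []).
    { intros E. rewrite E in Hl2last. simpl in Hl2last. rewrite Hl2last in nKwv. contradiction. }
    pose proof (@app_removelast_last _ l2 wv l2ne) as El2. rewrite Hl2last in El2.
    set (l2' := removelast l2) in El2.
    assert (l1ne : ru 1 :: l1 <> []) by discriminate.
    pose proof (@app_removelast_last _ (ru 1 :: l1) (ru 1) l1ne) as El1.
    rewrite last_cons_d, Hl1last in El1.
    set (l1' := removelast (ru 1 :: l1)) in El1.
    set (m := l1' ++ rv 1 :: wv :: l2').
    assert (Hpairs : pairs (wu :: m ++ [wu]) =
      (wu, ru 1) :: pairs (ru 1 :: l1) ++ (rv 1, wv) :: pairs (wv :: l2)).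
    { unfold m.
      replace (wu :: (l1' ++ rv 1 :: wv :: l2') ++ [wu]) with
        ((wu :: l1') ++ rv 1 :: (wv :: l2' ++ [wu])) by (simpl; rewrite <- app_assoc; reflexivity).
      rewrite pairs_app. change ((wu :: l1') ++ [rv 1]) with (wu :: (l1' ++ [rv 1])).
      rewrite <- El1. rewrite El2. reflexivity. }
    assert (out : forall y, In y (ru 1 :: l1) -> ~ In y F).
    { apply (walk_vertices (adj_minus adj F) (fun y => ~ In y F)); auto.
      intros x y [_ [_ ?]]; auto. }
    assert (inF : forall y, In y (wv :: l2) -> In y F).
    { apply (walk_vertices (fun a b => adj a b /\ In a F /\ In b F) (fun y => In y F)); auto.
      intros x y [_ [_ ?]]; auto. }
    assert (cnt_cons : forall (P : X * X -> Prop) a l, cnt P (a :: l) = ind (P a) + cnt P l)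
      by reflexivity.
    assert (cnt_split : forall P, cnt P ((wu, ru 1) :: pairs (ru 1 :: l1) ++ (rv 1, wv) :: pairs (wv :: l2))
      = ind (P (wu, ru 1)) + cnt P (pairs (ru 1 :: l1)) + ind (P (rv 1, wv)) + cnt P (pairs (wv :: l2))).
    { intros P. rewrite cnt_cons, cnt_app, cnt_cons. lia. }
    assert (Cc : Nat.even (cnt (cross _ K) (pairs (wu :: m ++ [wu]))) = true).
    { change (pairs (wu :: m ++ [wu])) with (cpairs (wu :: m)). apply cross_cycle. }
    rewrite Hpairs, cnt_split in Cc.
    assert (E1 : ind (cross _ K (wu, ru 1)) = 1).
    { apply ind_true. left. simpl. split; auto. }
    assert (E2 : cnt (cross _ K) (pairs (ru 1 :: l1)) = 0).
    { apply cnt_zero. intros [x y] Hp. apply pairs_In in Hp as [Hx Hy].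
      apply out in Hx. apply out in Hy. unfold cross; simpl.
      intros [[Hk _]|[_ Hk]]; apply KF in Hk; contradiction. }
    assert (E3 : ind (cross _ K (rv 1, wv)) = 0).
    { apply ind_false. unfold cross; simpl. intros [[Hk _]|[_ Hk]]; auto. }
    assert (E4 : cnt (cross _ K) (pairs (wv :: l2)) = cnt T (pairs (wv :: l2))).
    { apply cnt_ext. intros [x y] Hp. pose proof (pairs_In _ _ _ Hp) as [Hx Hy].
      apply crossT; auto. apply (Hl2 (x, y) Hp). }
    rewrite E1, E2, E3, E4 in Cc.
    assert (Tsym : forall p, T p <-> T (sw p)).
    { intros [a b]; unfold T, sw; simpl; tauto. }
    apply (extract adj T adj_irrefl Tsym (length m) wu m (le_n _)).
    - intros p Hp. rewrite Hpairs in Hp. destruct Hp as [<-|Hp]; [exact adj1|].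
      apply in_app_or in Hp as [Hp|[<-|Hp]].
      + apply (Hl1 p Hp).
      + exact adj2.
      + apply (Hl2 p Hp).
    - rewrite Hpairs, cnt_split.
      rewrite (ind_false (T (wu, ru 1))).
      2:{ unfold T, Eor, sw; simpl. intros [[_ [H _]]|[H _]]; auto; try (apply KF in H; contradiction). }
      rewrite (cnt_zero T (pairs (ru 1 :: l1))).
      2:{ intros [x y] Hp. apply pairs_In in Hp as [Hx Hy].
          apply out in Hx. apply out in Hy. unfold T, Eor, sw; simpl.
          intros [[H _]|[H _]]; apply KF in H; contradiction. }
      rewrite (ind_false (T (rv 1, wv))).
      2:{ unfold T, Eor, sw; simpl. intros [[H _]|[_ [H _]]]; auto; try (apply KF in H; contradiction). }
      revert Cc. generalize (cnt T (pairs (wv :: l2))). intros c Cc.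
      replace (1 + 0 + 0 + c) with (S c) in Cc by lia. replace (0 + 0 + 0 + c) with c by lia.
      rewrite Nat.even_succ in Cc. rewrite <- Nat.negb_odd, Cc. reflexivity. }
  destruct (nodup_exists F) as [L [HL HLi]].
  set (M := list_prod L L).
  assert (HM : NoDup M) by (apply NoDup_prod; auto).
  assert (EorM : forall m, Eor m -> In m M).
  { intros [a b] [Ka [Fb _]]. apply in_prod_iff. simpl in *. rewrite <- !HLi. auto. }
  assert (Eor2 : forall p, Eor p -> Eor (sw p) -> False).
  { intros [a b] [Ka [_ [nKb _]]] [Kb _]. simpl in *. contradiction. }
  set (N := fun C => cnt (fun m => Eor m /\ cyc_edge C (fst m) (snd m)) M).
  assert (NT : forall C, is_cycle adj C -> N C = cnt T (cpairs C)).
  { intros C HC. unfold N.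
    rewrite (cnt_ext _ (fun m => Eor m /\ (In m (cpairs C) \/ In (sw m) (cpairs C)))).
    2:{ intros [a b] _. rewrite cyc_edge_cpairs. reflexivity. }
    apply count_bij; auto.
    - apply cpairs_nodup. apply HC.
    - intros [a b] H1 H2. apply (cpairs_noswap C a b (proj1 (proj2 HC)) (proj1 HC) H1 H2). }
  assert (Neven : forall D, B D -> Nat.even (N D) = true).
  { intros D HD. assert (HDc : is_cycle adj D) by (apply hB; auto).
    destruct (classic (exists m, In m M /\ Eor m /\ cyc_edge D (fst m) (snd m))) as [Hex|Hno].
    - destruct Hex as [[a b] [_ [[_ [_ [_ [_ Hk]]]] Hce]]].
      pose proof (Hk D HD Hce) as DF.
      rewrite NT by auto. rewrite (cnt_ext _ (cross _ K)). apply cross_cycle.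
      intros [x y] Hp. symmetry. pose proof (cpairs_In _ _ _ Hp) as [Hx Hy].
      apply crossT; auto. apply (cycle_adj adj D HDc (x, y) Hp).
    - unfold N. rewrite cnt_zero; auto. intros m Hm Hm'. apply Hno. exists m; auto. }
  assert (Ngen : forall C, is_cycle adj C -> Nat.even (N C) = true).
  { intros C HC. destruct hB as [hB1 hB2]. destruct (hB2 C HC) as [Cs [HCs Hedge]].
    set (g := fun m : X * X => cnt (fun D => cyc_edge D (fst m) (snd m)) Cs).
    unfold N. rewrite (cnt_ext _ (fun m => Eor m /\ Nat.even (g m) = false)).
    2:{ intros [a b] _. simpl. split; intros [He Hc]; split; auto.
        - unfold g; simpl. apply odd_count_cnt. apply Hedge; auto. apply He.
        - apply Hedge. apply He. apply odd_count_cnt. exact Hc. }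
    unfold cnt at 1.
    rewrite (sumf_par _ (fun m => sumf (fun D => ind (Eor m /\ cyc_edge D (fst m) (snd m))) Cs)).
    2:{ intros m _. rewrite <- (sumf_ext (fun D => ind (Eor m) * ind (cyc_edge D (fst m) (snd m)))).
        2:{ intros D _. unfold ind.
            destruct (excluded_middle_informative (Eor m)), (excluded_middle_informative (cyc_edge D (fst m) (snd m))),
              (excluded_middle_informative (Eor m /\ cyc_edge D (fst m) (snd m))); tauto || lia. }
        rewrite <- sumf_mul_l. fold (cnt (fun D => cyc_edge D (fst m) (snd m)) Cs). fold (g m).
        generalize (g m). intros k. unfold ind.
        destruct (excluded_middle_informative (Eor m)), (excluded_middle_informative (Eor m /\ Nat.even k = false));
        destruct (Nat.even k) eqn:Eg; simpl; try rewrite Nat.add_0_r; try rewrite Eg; try tauto.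
        all: try (destruct a as [_ ?]; discriminate). all: try (exfalso; apply n; split; auto). all: try (exfalso; apply n0; split; auto). }
    rewrite sumf_swap. apply sumf_even. intros D HD.
    apply Neven. rewrite Forall_forall in HCs. auto. }
  destruct Hodd as [C [HC HCodd]].
  pose proof (Ngen C HC). rewrite NT in H by auto. congruence.
Qed.
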